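(* Let $k$ be a field and let $r,s\in\mathbb{Z}$ be coprime. Then $r_\epsilon$ and $s_\epsilon$ generate the unit ideal of the Grothendieck–Witt ring $GW(k)$.
   Context: For $n\ge0$, $n_\epsilon:=\sum_{i=1}^n\langle(-1)^{i-1}\rangle\in GW(k)$, where $\langle a\rangle$ is the class of the rank one form $ax^2$; for $n<0$ one sets $n_\epsilon:=\epsilon\cdot(-n)_\epsilon$ with $\epsilon=-\langle-1\rangle$ (Morel's convention). *)

(* Defs.v *)
(* Grothendieck-Witt ring GW(k) of a field k, built as the
   Grothendieck group (group completion) of the monoid of isometry classes of
   nondegenerate symmetric bilinear forms under orthogonal sum, with
   multiplication induced by the tensor (Kronecker) product.
   Elements of GW(k) are represented as formal differences [P] - [N]
   (pairs of forms), and equality in GW(k) is the relation gw_eq. *)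
From HB Require Import structures.
From mathcomp Require Import all_boot all_order all_algebra.
From mathcomp Require Import mxtens.
Set Implicit Arguments.
Unset Strict Implicit.
Unset Printing Implicit Defensive.
Import Order.TTheory GRing.Theory Num.Theory.
Local Open Scope ring_scope.

Section GW.
Variable k : fieldType.

(* A (possibly degenerate) bilinear form on k^n, given by its Gram matrix. *)
Definition form := {n : nat & 'M[k]_n}.

Definition Form n (A : 'M[k]_n) : form := existT _ n A.

Definition valid_form (A : form) : Prop :=
  (projT2 A)^T = projT2 A /\ \det (projT2 A) != 0.

Definition isometric (A B : form) : Prop :=
  exists e : projT1 A = projT1 B,
  exists2 P : 'M[k]_(projT1 B), P \in unitmx &
    P *m castmx (e, e) (projT2 A) *m P^T = projT2 B.

Definition osum (A B : form) : form :=
  Form (block_mx (projT2 A) 0 0 (projT2 B)).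

Definition otens (A B : form) : form := Form (projT2 A *t projT2 B).

Definition form0 : form := Form (0 : 'M[k]_0).
Definition diag1 (a : k) : form := Form (a%:M : 'M[k]_1).

(* formal differences P - N *)
Definition gw := (form * form)%type.

Definition valid_gw (x : gw) : Prop := valid_form x.1 /\ valid_form x.2.

Definition gw_eq (x y : gw) : Prop :=
  exists2 E : form, valid_form E &
    isometric (osum (osum x.1 y.2) E) (osum (osum y.1 x.2) E).

Definition gw_add (x y : gw) : gw := (osum x.1 y.1, osum x.2 y.2).
Definition gw_mul (x y : gw) : gw :=
  (osum (otens x.1 y.1) (otens x.2 y.2), osum (otens x.1 y.2) (otens x.2 y.1)).
Definition gw_one : gw := (diag1 1, form0).
Definition gw_opp (x : gw) : gw := (x.2, x.1).
Definition gw_of (A : form) : gw := (A, form0).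

Definition angle (a : k) : gw := gw_of (diag1 a).

Fixpoint nat_eps (n : nat) : gw :=
  match n with
  | 0 => gw_of form0
  | m.+1 => gw_add (nat_eps m) (angle ((-1) ^+ m))
  end.

Definition epsilon : gw := gw_opp (angle (-1)).

(* n_epsilon for n : int (Morel's convention) *)
Definition int_eps (n : int) : gw :=
  match n with
  | Posz m => nat_eps m
  | Negz m => gw_mul epsilon (nat_eps m.+1)
  end.

Definition gw_unit_ideal (x y : gw) : Prop :=
  exists a b : gw, valid_gw a /\ valid_gw b /\
    gw_eq (gw_add (gw_mul a x) (gw_mul b y)) gw_one.

End GW.

(* Main.v *)
Require Import Defs.
From mathcomp Require Import all_boot all_order all_algebra all_fingroup mxtens zify ring.
Set Implicit Arguments.
Unset Strict Implicit.
Unset Printing Implicit Defensive.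
Import Order.TTheory GRing.Theory Num.Theory.
Local Open Scope ring_scope.

Section S.
Variable k : fieldType.

Definition sgn (b : bool) : k := if b then -1 else 1.
Definition sdiag n (f : 'I_n -> bool) : 'M[k]_n := diag_mx (\row_i sgn (f i)).
Definition cnt n (f : 'I_n -> bool) (b : bool) : nat := (\sum_(i < n) (f i == b))%N.
Definition is_sd (A : Defs.form k) (p m : nat) : Prop :=
  exists f : 'I_(projT1 A) -> bool, projT2 A = sdiag f /\ cnt f false = p /\ cnt f true = m.

Lemma cnt_tot n (f : 'I_n -> bool) : (cnt f false + cnt f true)%N = n.
Proof.
rewrite /cnt -big_split /=.
rewrite (eq_bigr (fun _ => 1%N)); last by move=> i _; case: (f i).
by rewrite sum_nat_const card_ord muln1.
Qed.

Lemma count_cnt_seq (I : Type) (g : I -> bool) (P : pred bool) (s : seq I) :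
  count P (map g s) = (P false * \sum_(i <- s) (g i == false) + P true * \sum_(i <- s) (g i == true))%N.
Proof.
elim: s => [|x s IH]; first by rewrite !big_nil /= !muln0.
rewrite /= !big_cons IH; case: (g x) => /=; case: (P false); case: (P true); rewrite /= ?mul1n ?mul0n ?add0n ?addn0; lia.
Qed.

Lemma count_cnt n (g : 'I_n -> bool) (P : pred bool) :
  count P [tuple g i | i < n] = (P false * cnt g false + P true * cnt g true)%N.
Proof.
by rewrite /= count_cnt_seq /cnt !big_enum.
Qed.

Lemma valid_sd A p m : is_sd A p m -> valid_form A.
Proof.
case: A => n M [f [/= -> _]]; split; first exact: tr_diag_mx.
rewrite det_diag; apply/prodf_neq0 => i _; rewrite mxE /sgn.
by case: (f i); rewrite ?oppr_eq0 oner_eq0.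
Qed.

Lemma iso_sd A B p m : is_sd A p m -> is_sd B p m -> isometric A B.
Proof.
case: A => n M; case: B => n' N [f [/= -> [hf1 hf2]]] [g [/= -> [hg1 hg2]]].
have e : n' = n by move: (cnt_tot f) (cnt_tot g); rewrite hf1 hf2 hg1 hg2 /= => <- <-.
subst n'.
exists erefl; rewrite castmx_id /=.
have hp : perm_eq [tuple g i | i < n] [tuple f i | i < n].
  by apply/seq.permP => P; rewrite !count_cnt hf1 hf2 hg1 hg2.
case/tuple_permP: hp => s /val_inj hs.
have hg : forall i, g i = f (s i).
  move=> i; have := congr1 (fun t => tnth t i) hs.
  by rewrite /= !tnth_mktuple.
exists (perm_mx s); first exact: unitmx_perm.
rewrite tr_perm_mx -col_permE -row_permE; apply/matrixP => i j.
by rewrite !mxE (inj_eq (@perm_inj _ s)) hg.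
Qed.


Lemma osum_sd A B p m p' m' : is_sd A p m -> is_sd B p' m' ->
  is_sd (osum A B) (p + p') (m + m').
Proof.
case: A => n M; case: B => n' N [f [/= -> [hf1 hf2]]] [g [/= -> [hg1 hg2]]].
pose h (i : 'I_(n + n')) := match split i with inl a => f a | inr b => g b end.
exists h; split.
  rewrite /= /sdiag -diag_mx_row; congr diag_mx; apply/matrixP => i j.
  rewrite !mxE /h; case: (split j) => a; by rewrite mxE.
have hl : forall i, h (lshift n' i) = f i.
  by move=> i; rewrite /h (unsplitK (inl i)).
have hr : forall i, h (rshift n i) = g i.
  by move=> i; rewrite /h (unsplitK (inr i)).
by rewrite /cnt !big_split_ord /=; split; [rewrite -hf1 -hg1|rewrite -hf2 -hg2];
  congr (_ + _)%N; apply: eq_bigr => i _; rewrite ?hl ?hr.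
Qed.

Lemma sum_if n (f : 'I_n -> bool) (F : bool -> nat) :
  (\sum_(i < n) F (f i))%N = (cnt f false * F false + cnt f true * F true)%N.
Proof.
rewrite /cnt !big_distrl -big_split /=; apply: eq_bigr => i _.
by case: (f i); rewrite /= ?mul0n ?mul1n ?addn0.
Qed.

Lemma otens_sd A B p m p' m' : is_sd A p m -> is_sd B p' m' ->
  is_sd (otens A B) (p * p' + m * m') (p * m' + m * p').
Proof.
case: A => n M; case: B => n' N [f [/= -> [hf1 hf2]]] [g [/= -> [hg1 hg2]]].
pose h (i : 'I_(n * n')) := xorb (f (mxtens_unindex i).1) (g (mxtens_unindex i).2).
exists h; split.
  apply/matrixP => i j; rewrite /=.
  case: (mxtens_indexP i) => a b; case: (mxtens_indexP j) => c d.
  rewrite tensmxE !mxE /h !mxtens_indexK /= (inj_eq (can_inj (@mxtens_indexK n n'))).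
  rewrite xpair_eqE; case: (a == c); case: (b == d);
  case: (f a); case: (g b); rewrite /= /sgn ?mulr1n ?mulr0n ?mulr0 ?mul0r ?mulrNN ?mulr1 ?mul1r //.
have key : forall bb, cnt h bb = (cnt f false * cnt g bb + cnt f true * cnt g (~~ bb))%N.
  move=> bb; rewrite {1}/cnt (reindex (@mxtens_index n n')) /=; last first.
    by exists (@mxtens_unindex n n') => x _; rewrite ?mxtens_indexK ?mxtens_unindexK.
  rewrite (eq_bigr (fun j => nat_of_bool (h (mxtens_index (j.1, j.2)) == bb))); last by case.
  rewrite -(pair_bigA _ (fun i j => nat_of_bool (h (mxtens_index (i, j)) == bb))) /=.
  rewrite (eq_bigr (fun i => cnt g (xorb (f i) bb))); last first.
    move=> i _; apply: eq_bigr => j _; rewrite /h mxtens_indexK /=.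
    by case: (f i); case: (g j); case: bb.
  by rewrite (sum_if f (fun c => cnt g (xorb c bb))) /=.
rewrite !key /= hf1 hf2 hg1 hg2; split => //; lia.
Qed.

Lemma form0_sd : is_sd (form0 k) 0 0.
Proof.
exists (fun _ => false); split; first by apply/matrixP => [[]].
by rewrite /cnt !big_ord0.
Qed.

Lemma diag1_sd (b : bool) : is_sd (diag1 (sgn b)) (~~ b) b.
Proof.
exists (fun _ => b); split.
  by apply/matrixP => i j; rewrite !ord1 !mxE.
by rewrite /cnt !big_ord1; case: b.
Qed.

Lemma mk_sd (p m : nat) : exists A, is_sd A p m.
Proof.
exists (Form (sdiag (fun i : 'I_(p + m) => (p <= i)%N))); exists (fun i => (p <= i)%N).
split => //; rewrite /cnt !big_split_ord /=; split.
  rewrite (eq_bigr (fun _ => 1%N)); last by move=> i _; rewrite /= leqNgt (ltn_ord i).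
  rewrite [X in (_ + X)%N](eq_bigr (fun _ => 0%N)); last by move=> i _; rewrite /= leq_addr.
  by rewrite !sum_nat_const !card_ord; lia.
rewrite (eq_bigr (fun _ => 0%N)); last by move=> i _; rewrite /= leqNgt (ltn_ord i).
rewrite [X in (_ + X)%N](eq_bigr (fun _ => 1%N)); last by move=> i _; rewrite /= leq_addr.
by rewrite !sum_nat_const !card_ord; lia.
Qed.


Definition rep (x : gw k) (a b : int) : Prop :=
  exists p1 m1 p2 m2 : nat, is_sd x.1 p1 m1 /\ is_sd x.2 p2 m2 /\
    a = p1%:Z - p2%:Z /\ b = m1%:Z - m2%:Z.

Lemma rep_valid x a b : rep x a b -> valid_gw x.
Proof. by case=> [p1 [m1 [p2 [m2 [h1 [h2 _]]]]]]; split; [apply: valid_sd h1|apply: valid_sd h2]. Qed.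

Lemma rep_eq x y a b : rep x a b -> rep y a b -> gw_eq x y.
Proof.
case=> [p1 [m1 [p2 [m2 [h1 [h2 [ea eb]]]]]]].
case=> [q1 [n1 [q2 [n2 [g1 [g2 [fa fb]]]]]]].
exists (form0 k); first exact: valid_sd form0_sd.
have H1 := osum_sd (osum_sd h1 g2) form0_sd.
have H2 := osum_sd (osum_sd g1 h2) form0_sd.
have e1 : (q1 + p2 + 0 = p1 + q2 + 0)%N by lia.
have e2 : (n1 + m2 + 0 = m1 + n2 + 0)%N by lia.
rewrite e1 e2 in H2.
exact: iso_sd H1 H2.
Qed.

Lemma rep_add x y a b c d : rep x a b -> rep y c d -> rep (gw_add x y) (a + c) (b + d).
Proof.
case=> [p1 [m1 [p2 [m2 [h1 [h2 [ea eb]]]]]]].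
case=> [q1 [n1 [q2 [n2 [g1 [g2 [fa fb]]]]]]].
exists (p1 + q1)%N, (m1 + n1)%N, (p2 + q2)%N, (m2 + n2)%N.
split; first exact: osum_sd.
split; first exact: osum_sd.
by rewrite ea eb fa fb !PoszD; split; ring.
Qed.

Lemma rep_mul x y a b c d : rep x a b -> rep y c d ->
  rep (gw_mul x y) (a * c + b * d) (a * d + b * c).
Proof.
case=> [p1 [m1 [p2 [m2 [h1 [h2 [ea eb]]]]]]].
case=> [q1 [n1 [q2 [n2 [g1 [g2 [fa fb]]]]]]].
eexists _, _, _, _.
split; first exact: osum_sd (otens_sd h1 g1) (otens_sd h2 g2).
split; first exact: osum_sd (otens_sd h1 g2) (otens_sd h2 g1).
by rewrite ea eb fa fb !PoszD !PoszM; split; ring.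
Qed.

Lemma rep_ex a b : exists x, rep x a b.
Proof.
pose p1 := `|Num.max a 0|%N; pose p2 := `|Num.max (- a) 0|%N.
pose m1 := `|Num.max b 0|%N; pose m2 := `|Num.max (- b) 0|%N.
have [A hA] := mk_sd p1 m1; have [B hB] := mk_sd p2 m2.
exists (A, B), p1, m1, p2, m2; do 2 split => //.
rewrite /p1 /p2 /m1 /m2; split; lia.
Qed.

Lemma rep_one : rep (gw_one k) 1 0.
Proof.
exists 1%N, 0%N, 0%N, 0%N; split; first exact: (diag1_sd false).
by split; first exact: form0_sd.
Qed.

Lemma rep_angle (b : bool) : rep (angle (sgn b)) (~~ b) b.
Proof.
exists (~~ b : nat), (b : nat), 0%N, 0%N; split; first exact: diag1_sd.
split; first exact: form0_sd.
by rewrite !subr0.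
Qed.

Lemma rep_form0 : rep (gw_of (form0 k)) 0 0.
Proof. by exists 0%N, 0%N, 0%N, 0%N; do 2 (split; first exact: form0_sd). Qed.

Lemma rep_eps : rep (epsilon k) 0 (-1).
Proof.
exists 0%N, 0%N, 0%N, 1%N; split; first exact: form0_sd.
by split; first exact: (diag1_sd true).
Qed.


Lemma rep_conv x a b a' b' : rep x a b -> a = a' -> b = b' -> rep x a' b'.
Proof. by move=> h <- <-. Qed.

Lemma nat_epsS n : nat_eps k n.+1 = gw_add (nat_eps k n) (angle ((-1) ^+ n)).
Proof. by []. Qed.

Lemma sgn_pow n : (-1) ^+ n = sgn (odd n).
Proof. by rewrite -signr_odd; case: (odd n); rewrite ?expr0 ?expr1. Qed.

Lemma rep_nat j : rep (nat_eps k (j.*2)) j j /\ rep (nat_eps k (j.*2.+1)) (j + 1)%N j.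
Proof.
elim: j => [|j [IH1 IH2]].
  split; first exact: rep_form0.
  rewrite nat_epsS sgn_pow /=.
  by apply: rep_conv (rep_add (rep_form0) (rep_angle false)) _ _.
have H1 : rep (nat_eps k (j.+1).*2) j.+1 j.+1.
  rewrite doubleS nat_epsS sgn_pow /= odd_double /=.
  apply: rep_conv (rep_add IH2 (rep_angle true)) _ _ => /=; lia.
split => //.
rewrite doubleS in H1 *; rewrite nat_epsS sgn_pow.
have -> : odd (j.*2.+2) = false by rewrite /= odd_double.
apply: (rep_conv (rep_add H1 (rep_angle false))) => /=; lia.
Qed.

Lemma rep_int r : exists j : int, exists e : bool, r = 2 * j + e /\ rep (int_eps k r) (j + e) j.
Proof.
case: r => n.
  have := odd_double_half n; set j := n./2; case: (odd n) => /= H; rewrite -H.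
    exists j, true; split; first lia.
    by apply: rep_conv (rep_nat j).2 _ _; lia.
  exists j, false; split; first lia.
  by apply: rep_conv (rep_nat j).1 _ _; lia.
change (int_eps k (Negz n)) with (gw_mul (epsilon k) (nat_eps k n.+1)).
rewrite NegzE.
have H := odd_double_half n.+1; set j := n.+1./2 in H.
case: (boolP (odd n.+1)) => ho.
  have -> : n.+1 = j.*2.+1 by rewrite ho in H; lia.
  exists (- j%:Z - 1), true; split; first lia.
  by apply: rep_conv (rep_mul rep_eps (rep_nat j).2) _ _; lia.
have -> : n.+1 = j.*2 by rewrite (negbTE ho) in H; lia.
exists (- j%:Z), false; split; first lia.
by apply: rep_conv (rep_mul rep_eps (rep_nat j).1) _ _; lia.
Qed.

End S.

Theorem lemma2p10 (k : fieldType) (r s : int) :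
  coprimez r s ->
  gw_unit_ideal (int_eps k r) (int_eps k s).
Proof.
move=> /coprimezP [[u v] /= huv].
have [j1 [e1 [er hr]]] := rep_int k r.
have [j2 [e2 [es hs]]] := rep_int k s.
rewrite er es in huv.
case: e1 er hr huv => er hr huv.
  have [a ha] := rep_ex k (1 - j1 * u) (- j1 * u).
  have [b hb] := rep_ex k (- j1 * v) (- j1 * v).
  exists a, b; split; first exact: rep_valid ha.
  split; first exact: rep_valid hb.
  apply: rep_eq (rep_one k).
  apply: rep_conv (rep_add (rep_mul ha hr) (rep_mul hb hs)) _ _.
    have E : (1 - j1 * u) * (j1 + true) + - j1 * u * j1 + (- j1 * v * (j2 + e2) + - j1 * v * j2) - 1
         = j1 * (1 - (u * (2 * j1 + true) + v * (2 * j2 + e2))) by rewrite /=; ring.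
    by apply/eqP; rewrite -subr_eq0 E huv subrr mulr0.
  have E : (1 - j1 * u) * j1 + - j1 * u * (j1 + true) + (- j1 * v * j2 + - j1 * v * (j2 + e2))
         = j1 * (1 - (u * (2 * j1 + true) + v * (2 * j2 + e2))) by rewrite /=; ring.
  by rewrite E huv subrr mulr0.
case: e2 es hs huv => es hs huv; last first.
  have : 2 * (u * j1 + v * j2) = u * (2 * j1 + false) + v * (2 * j2 + false) by rewrite /=; ring.
  rewrite huv.
  lia.
have [a ha] := rep_ex k (- j2 * u) (- j2 * u).
have [b hb] := rep_ex k (1 - j2 * v) (- j2 * v).
exists a, b; split; first exact: rep_valid ha.
split; first exact: rep_valid hb.
apply: rep_eq (rep_one k).
apply: rep_conv (rep_add (rep_mul ha hr) (rep_mul hb hs)) _ _.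
  have E : - j2 * u * (j1 + false) + - j2 * u * j1 + ((1 - j2 * v) * (j2 + true) + - j2 * v * j2) - 1
       = j2 * (1 - (u * (2 * j1 + false) + v * (2 * j2 + true))) by rewrite /=; ring.
  by apply/eqP; rewrite -subr_eq0 E huv subrr mulr0.
have E : - j2 * u * j1 + - j2 * u * (j1 + false) + ((1 - j2 * v) * j2 + - j2 * v * (j2 + true))
     = j2 * (1 - (u * (2 * j1 + false) + v * (2 * j2 + true))) by rewrite /=; ring.
by rewrite E huv subrr mulr0.
Qed.
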